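(* Let $X$, $\partial X$ be Banach spaces, $A_m:D(A_m)\subseteq X\to X$ a closed linear operator, $L\in\mathcal{L}(X,\partial X)$ surjective, $A_0\subseteq A_m$ with $D(A_0):=D(A_m)\cap\ker(L)$, and $B:D(B)\subseteq X\to\partial X$ relatively $A_0$-bounded. For $\lambda\in\rho(A_0)$ let $L^{A_m}_\lambda:=(L|_{\ker(\lambda-A_m)})^{-1}\in\mathcal{L}(\partial X,X)$ and define $N^{A_m}_\lambda x:=BL^{A_m}_\lambda x$, $D(N^{A_m}_\lambda):=\{x\in\partial X:L^{A_m}_\lambda x\in D(B)\}$. Let $P:D(P)\subseteq X\to X$ be relatively $A_m$-bounded, let $A_0+P$ have domain $D(A_0)$, and let $\lambda\in\rho(A_0)\cap\rho(A_0+P)$. Then the Dirichlet operator $L^{A_m+P}_\lambda:=(L|_{\ker(\lambda-A_m-P)})^{-1}\in\mathcal{L}(\partial X,X)$ exists, so that $N^{A_m+P}_\lambda x:=BL^{A_m+P}_\lambda x$ with $D(N^{A_m+P}_\lambda):=\{x:L^{A_m+P}_\lambda x\in D(B)\}$ is defined; moreover $D(N^{A_m}_\lambda)=D(N^{A_m+P}_\lambda)$ and the difference $N^{A_m}_\lambda-N^{A_m+P}_\lambda$ is bounded on this common domain.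
   Context: $B$ relatively $A_0$-bounded means $D(A_0)\subseteq D(B)$ and $\|Bf\|\le a\|A_0f\|+b\|f\|$ for $f\in D(A_0)$. $P$ relatively $A_m$-bounded means $D(A_m)\subseteq D(P)$ and $\|Pf\|\le a\|A_mf\|+b\|f\|$ for $f\in D(A_m)$. *)

(* Defs.v *)
(* Unbounded operators T : D(T) ⊆ X -> Y are modelled
   as a pair (domain : set X, action : X -> Y); values outside the domain are
   irrelevant. *)
From HB Require Import structures.
From mathcomp Require Import all_boot all_order all_algebra.
From mathcomp Require Import all_classical all_reals all_analysis.
From mathcomp Require Export complex.
Set Implicit Arguments. Unset Strict Implicit. Unset Printing Implicit Defensive.
Import Order.TTheory GRing.Theory Num.Theory.
Import numFieldNormedType.Exports.
Local Open Scope classical_set_scope.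
Local Open Scope ring_scope.

Section Ops.
Variable K : numFieldType.

Definition subspace (V : lmodType K) (D : set V) : Prop :=
  D 0 /\ forall (a : K) (x y : V), D x -> D y -> D (a *: x + y).

Definition lin_op (V W : lmodType K) (D : set V) (T : V -> W) : Prop :=
  subspace D /\
  forall (a : K) (x y : V), D x -> D y -> T (a *: x + y) = a *: T x + T y.

Definition closed_op (V W : normedModType K) (D : set V) (T : V -> W) : Prop :=
  closed [set p : V * W | D p.1 /\ p.2 = T p.1].

Definition in_resolvent (V : normedModType K) (D : set V) (T : V -> V)
    (l : K) : Prop :=
  exists Rl : {linear V -> V}, continuous Rl /\
    (forall y, D (Rl y) /\ l *: Rl y - T (Rl y) = y) /\
    (forall x, D x -> Rl (l *: x - T x) = x).

Definition rel_bounded (V W U : normedModType K) (DS : set V) (S : V -> W)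
    (DT : set V) (T : V -> U) : Prop :=
  DT `<=` DS /\
  exists a b : K, 0 <= a /\ 0 <= b /\
    forall f, DT f -> `|S f| <= a * `|T f| + b * `|f|.

Definition dirichlet_op (V Y : normedModType K) (D : set V) (T : V -> V)
    (L : V -> Y) (l : K) (Dl : {linear Y -> V}) : Prop :=
  continuous Dl /\
  (forall x, D (Dl x) /\ l *: Dl x - T (Dl x) = 0 /\ L (Dl x) = x) /\
  (forall u, D u -> l *: u - T u = 0 -> Dl (L u) = u).

End Ops.

(* Main.v *)
Require Import Defs.
From HB Require Import structures.
From mathcomp Require Import all_boot all_order all_algebra.
From mathcomp Require Import all_classical all_reals all_analysis.
From mathcomp Require Import complex.
From mathcomp Require Import ring lra.
Import Order.TTheory GRing.Theory Num.Theory.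
Import numFieldNormedType.Exports.
Local Open Scope classical_set_scope.
Local Open Scope ring_scope.
Local Open Scope complex_scope.
Lemma zid (V : zmodType) (x0 y' s1 s2 : V) : y' - (s1 - s2) = (x0 + y' - s1) - (x0 - s2).
Proof.
rewrite [in RHS]opprB [in RHS]addrC [in RHS]addrA [s2 - x0 + _]addrC.
by rewrite [x0 + y']addrC -[y' + x0 + _]addrA [x0 + (s2 - x0)]addrC subrK opprB addrA.
Qed.

Section Aux.
Context {R : realType}.
Local Notation C := (R[i]).

Lemma archi2 (c e : R) : 0 < e -> exists n : nat, c / 2 ^+ n < e.
Proof.
move=> e0.
exists (Num.truncn (c / e)).
set n := Num.truncn (c / e).
rewrite ltr_pdivrMr ?exprn_gt0 // -ltr_pdivrMl //.
apply: (@lt_le_trans _ _ (n.+1%:R)).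
  case: (lerP 0 (c/e)) => h; first by rewrite mulrC Num.Theory.truncnS_gt.
  by rewrite mulrC (lt_le_trans h).
rewrite -natrX ler_nat; exact: ltn_expl.
Qed.

Context {V : normedModType C}.
Definition N (x : V) : R := complex.Re `|x|.

Lemma NE x : `|x| = (N x)%:C.
Proof. by rewrite /N RRe_real // normr_real. Qed.

Lemma N_ge0 x : 0 <= N x.
Proof. by rewrite -ler0c -NE. Qed.

Lemma N_le x y : (`|x| <= `|y|) = (N x <= N y).
Proof. by rewrite !NE lecR. Qed.

Lemma N_triD x y : N (x + y) <= N x + N y.
Proof. rewrite -lecR rmorphD /= -!NE; exact: ler_normD. Qed.

Lemma NN x : N (- x) = N x.
Proof. by rewrite /N normrN. Qed.

Lemma NB x y : N (x - y) = N (y - x).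
Proof. by rewrite -NN opprB. Qed.

Lemma N0 : N 0 = 0.
Proof. by rewrite /N normr0. Qed.

Lemma N_eq0 x : N x = 0 -> x = 0.
Proof. by move=> h; apply/normr0_eq0; rewrite NE h. Qed.

Lemma normC_real (a : R) : `|a%:C| = `|a|%:C.
Proof. by rewrite normc_def /= expr0n addr0 sqrtr_sqr. Qed.

Lemma NZ (a : R) x : N (a%:C *: x) = `|a| * N x.
Proof.
apply: complexI; rewrite -NE normrZ normC_real NE.
by rewrite rmorphM.
Qed.

Lemma NZc (a : C) x : N (a *: x) = complex.Re `|a| * N x.
Proof.
apply: complexI; rewrite -NE normrZ NE.
by rewrite rmorphM /= RRe_real // normr_real.
Qed.

Lemma cv_cvg (u : nat -> V) x :
  (forall e : R, 0 < e -> exists K, forall m, (K <= m)%N -> N (u m - x) < e) ->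
  u @ \oo --> x.
Proof.
move=> h; apply/cvgrPdist_lt => e e0.
have er : e \is Num.real by exact: gtr0_real.
rewrite -(RRe_real er) in e0 *; rewrite ltcR in e0.
have [K hK] := h _ e0.
exists K => // m Km /=.
by rewrite NE ltcR NB; apply: hK.
Qed.

Lemma cvg_cv (u : nat -> V) x : u @ \oo --> x ->
  forall e : R, 0 < e -> exists K, forall m, (K <= m)%N -> N (u m - x) < e.
Proof.
move=> /cvgrPdist_lt h e e0.
have : 0 < e%:C by rewrite ltcR.
move=> /h [K _ hK]; exists K => m Km.
by have := hK m Km; rewrite /= NE ltcR NB.
Qed.
End Aux.

Section Aux2.
Set Implicit Arguments.
Variable R : realType.
Local Notation C := (R[i]).
Lemma cauchy_lim (V : completeNormedModType C) (u : nat -> V) :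
  (forall e : R, 0 < e -> exists K, forall m n, (K <= m)%N -> (K <= n)%N -> N (u m - u n) < e) ->
  exists l : V, u @ \oo --> l.
Proof.
move=> h.
have : [cvg (u @ \oo) in V].
  apply: cauchy_cvg; apply: cauchy_exP => e e0.
  have er : e \is Num.real by exact: gtr0_real.
  rewrite -(RRe_real er) in e0 *; rewrite ltcR in e0.
  have [K hK] := h _ e0.
  exists (u K), K => // m Km.
  by rewrite -ball_normE /ball_ /= NE ltcR; apply: hK.
by move/cvg_ex => [l hl]; exists l.
Qed.
End Aux2.

Section CG.
Set Implicit Arguments.
Variable R : realType.
Local Notation C := (R[i]).
Variables (X Y : completeNormedModType C) (T : X -> Y).
Hypothesis linT : forall (a : C) x y, T (a *: x + y) = a *: T x + T y.
Hypothesis clT : forall (u : nat -> X) (x : X) (z : Y),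
  u @ \oo --> x -> (T \o u) @ \oo --> z -> T x = z.

Lemma T0 : T 0 = 0.
Proof.
have := linT 1 0 0; rewrite !scale1r !addr0 => h.
by apply: (addrI (T 0)); rewrite addr0 -h.
Qed.

Lemma TD x y : T (x + y) = T x + T y.
Proof. by have := linT 1 x y; rewrite !scale1r. Qed.

Lemma TZ a x : T (a *: x) = a *: T x.
Proof. by have := linT a x 0; rewrite !addr0 T0 addr0. Qed.

Lemma TB x y : T (x - y) = T x - T y.
Proof. by rewrite TD -scaleN1r TZ scaleN1r. Qed.

Lemma baire_step : exists (n : nat) (x0 : X) (r : R), 0 < r /\
  forall y, N (y - x0) < r -> forall e, 0 < e ->
    exists s, N (T s) <= n%:R /\ N (y - s) < e.
Proof.
apply: contrapT => Hneg.
have H : forall p : nat * X * R, exists q : X * R, 0 < p.2 ->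
   [/\ N (q.1 - p.1.2) < p.2, 0 < q.2 &
       forall s, N (T s) <= p.1.1%:R -> q.2 <= N (q.1 - s)].
  move=> [[n x0] r] /=.
  case: (ltrP 0 r) => r0; last first.
    by exists (0, 0).
  apply: contrapT => hq; apply: Hneg; exists n, x0, r; split => // y yr e e0.
  apply: contrapT => hs; apply: hq; exists (y, e) => _ /=; split => // s Ts.
  rewrite leNgt; apply/negP => lt; apply: hs; exists s; split => //.
have [G HG] := choice H.
pose fix xr (k : nat) : X * R := if k is k'.+1 then
   ((G (k', (xr k').1, (xr k').2)).1,
    Num.min (G (k', (xr k').1, (xr k').2)).2 ((xr k').2 - N ((G (k', (xr k').1, (xr k').2)).1 - (xr k').1)) / 2)
  else (0, 1).
pose x k := (xr k).1.
pose r k := (xr k).2.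
have xS k : x k.+1 = (G (k, x k, r k)).1 by [].
have rS k : r k.+1 = Num.min (G (k, x k, r k)).2 (r k - N (x k.+1 - x k)) / 2 by [].
have rpos k : 0 < r k.
  elim: k => [|k IH]; first by rewrite /r /= ltr01.
  have [h1 h2 _] := HG (k, x k, r k) IH.
  rewrite rS divr_gt0 // lt_min h2 /= subr_gt0 xS; exact: h1.
have step k : [/\ N (x k.+1 - x k) + r k.+1 <= r k, r k.+1 <= r k / 2 &
    r k.+1 <= (G (k, x k, r k)).2 / 2].
  have [h1 h2 _] := HG (k, x k, r k) (rpos k).
  have hr := rpos k.+1.
  rewrite rS; split.
  - have : Num.min (G (k, x k, r k)).2 (r k - N (x k.+1 - x k)) <= r k - N (x k.+1 - x k) by rewrite ge_min lexx orbT.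
    have := N_ge0 (x k.+1 - x k).
    set m := Num.min _ _ => hN hm.
    have : 0 <= m by move: (rpos k.+1); rewrite rS => /ltW; rewrite pmulr_lge0 // invr_gt0.
    lra.
  - have : Num.min (G (k, x k, r k)).2 (r k - N (x k.+1 - x k)) <= r k - N (x k.+1 - x k) by rewrite ge_min lexx orbT.
    have := N_ge0 (x k.+1 - x k).
    set m := Num.min _ _ => hN hm.
    lra.
  - have : Num.min (G (k, x k, r k)).2 (r k - N (x k.+1 - x k)) <= (G (k, x k, r k)).2 by rewrite ge_min lexx.
    set m := Num.min _ _ => hm.
    lra.
have nest k m : N (x (k + m)%N - x k) + r (k + m)%N <= r k.
  elim: m => [|m IH]; first by rewrite addn0 subrr N0 add0r.
  rewrite addnS.
  have [h1 _ _] := step (k + m)%N.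
  have := N_triD (x (k + m).+1 - x (k + m)%N) (x (k + m)%N - x k).
  rewrite addrA subrK.
  lra.
have rgeo k : r k <= (2 ^+ k)^-1.
  elim: k => [|k IH]; first by rewrite /r /= expr0 invr1.
  have [_ h2 _] := step k.
  rewrite exprS invfM.
  have : r k / 2 <= (2 ^+ k)^-1 / 2 by rewrite ler_pM2r // -[X in _ <= X]mul1r.
  rewrite mulrC [X in _ <= X -> _]mulrC.
  lra.
have nestle k m : (k <= m)%N -> N (x m - x k) <= r k.
  move=> km; have := nest k (m - k)%N; rewrite subnKC //.
  have := rpos m; lra.
have [xs hxs] : exists xs : X, x @ \oo --> xs.
  apply: cauchy_lim => e e0.
  have [K hK] := @archi2 _ 2 _ e0.
  exists K => m n Km Kn.
  have := N_triD (x m - x K) (x K - x n).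
  rewrite addrA subrK.
  have := nestle K m Km; have := nestle K n Kn; rewrite (NB (x K)).
  have := rgeo K.
  move: hK.
  set q := (2 ^+ K)^-1 => hK.
  lra.
pose k := (Num.truncn (N (T xs))).+1.
have Tk : N (T xs) <= k%:R.
  apply/ltW; rewrite /k.
  exact: Num.Theory.truncnS_gt.
have [_ _ h3] := HG (k, x k, r k) (rpos k).
have := h3 xs Tk; rewrite -xS => hle.
set ek := (G (k, x k, r k)).2 in hle.
have ek0 : 0 < ek by have [_ h2 _] := HG (k, x k, r k) (rpos k).
have [K hK] := cvg_cv _ _ hxs (ek / 2) (divr_gt0 ek0 (ltr0Sn _ 1)).
pose m := maxn K k.+1.
have t1 := N_triD (x k.+1 - x m) (x m - xs).
rewrite addrA subrK in t1.
have t2 := nestle k.+1 m (leq_maxr _ _).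
rewrite NB in t2.
have t3 := hK m (leq_maxl _ _).
have [_ _ h4] := step k.
rewrite -/ek in h4.
lra.
Qed.

Lemma rel_approx : exists M : R, 0 <= M /\
  forall y, exists s, N (T s) <= M * N y /\ N (y - s) <= N y / 2.
Proof.
have [n [x0 [r [r0 H]]]] := baire_step.
exists (4 * n%:R / r); split; first by rewrite divr_ge0 // ?mulr_ge0 // ltW.
move=> y; have [->|y0] := eqVneq y 0.
  by exists 0; rewrite T0 subrr !N0 mulr0 mul0r.
have Ny0 : 0 < N y.
  rewrite lt_def N_ge0 andbT; apply/eqP => h; move/eqP: y0; apply.
  exact: N_eq0 h.
pose d := 2 * N y / r.
have d0 : 0 < d by rewrite /d divr_gt0 // mulr_gt0.
pose y' := (d^-1)%:C *: y.
have Ny' : N y' = r / 2.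
  rewrite /y' NZ ger0_norm ?invr_ge0 ?ltW // /d.
  by field; rewrite ?gt_eqF.
have yE : y = d%:C *: y'.
  by rewrite /y' scalerA -rmorphM /= mulfV ?gt_eqF // scale1r.
have r8 : 0 < r / 8 by rewrite divr_gt0.
have [s1 [hs1 hs1']] := H (x0 + y') ltac:(rewrite (addrC x0) addrK Ny'; lra) (r / 8) r8.
have [s2 [hs2 hs2']] := H x0 ltac:(rewrite subrr N0 //) (r / 8) r8.
exists (d%:C *: (s1 - s2)); split.
  rewrite TZ NZ (ger0_norm (ltW d0)) TB.
  have h1 := N_triD (T s1) (- T s2); rewrite NN in h1.
  have h2 : N (T s1 - T s2) <= 2 * n%:R by lra.
  have -> : 4 * n%:R / r * N y = d * (2 * n%:R) by rewrite /d; field; rewrite gt_eqF.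
  by rewrite ler_pM2l.
rewrite {1}yE -scalerBr NZ (ger0_norm (ltW d0)).
have -> : y' - (s1 - s2) = (x0 + y' - s1) - (x0 - s2).
  exact: zid.
have h1 := N_triD (x0 + y' - s1) (- (x0 - s2)); rewrite NN in h1.
have h2 : N (x0 + y' - s1 - (x0 - s2)) <= r / 4 by lra.
have -> : N y / 2 = d * (r / 4) by rewrite /d; field; rewrite gt_eqF.
by rewrite ler_pM2l.
Qed.

Lemma closed_graph : exists M : R, 0 <= M /\ forall y, N (T y) <= M * N y.
Proof.
have [M [M0 HM]] := rel_approx.
have [g hg] := choice HM.
exists (2 * M); split; first by rewrite mulr_ge0.
move=> y.
pose yk k := iter k (fun z => z - g z) y.
have ykS k : yk k.+1 = yk k - g (yk k) by [].
have ykb k : N (yk k) <= N y * (2 ^+ k)^-1.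
  elim: k => [|k IH]; first by rewrite expr0 invr1 mulr1.
  rewrite ykS; have [_ h] := hg (yk k).
  have h2 : N (yk k) / 2 <= N y * (2 ^+ k)^-1 / 2 by rewrite ler_pM2r.
  have -> : N y * (2 ^+ k.+1)^-1 = N y * (2 ^+ k)^-1 / 2.
    by rewrite exprS invfM; ring.
  exact: le_trans h h2.
pose fix Sp k := if k is k'.+1 then Sp k' + g (yk k') else 0.
have SpE k : Sp k = y - yk k.
  elim: k => [|k IH]; first by rewrite /= subrr.
  have -> : Sp k.+1 = Sp k + g (yk k) by [].
  by rewrite IH ykS [in RHS]opprB [in RHS]addrA addrAC.
pose Z k := T (Sp k).
have ZS k : Z k.+1 = Z k + T (g (yk k)) by rewrite /Z /= TD.
have Tg k : N (T (g (yk k))) <= M * N y * (2 ^+ k)^-1.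
  have [h _] := hg (yk k).
  apply: le_trans h _; rewrite -mulrA ler_wpM2l //.
have Zb n m : N (Z (n + m)%N - Z n) <=
    2 * M * N y * ((2 ^+ n)^-1 - (2 ^+ (n + m))^-1).
  elim: m => [|m IH]; first by rewrite addn0 !subrr N0 mulr0.
  rewrite addnS ZS addrAC.
  have h1 := N_triD (Z (n + m)%N - Z n) (T (g (yk (n + m)%N))).
  have h2 := Tg (n + m)%N.
  have -> : (2 ^+ (n + m).+1)^-1 = (2 ^+ (n + m))^-1 / 2 :> R.
    by rewrite exprS invfM mulrC.
  move: h1 h2 IH.
  set a := (2 ^+ n)^-1; set b := (2 ^+ (n + m))^-1; set K := M * N y.
  have -> : 2 * M * N y = 2 * K by rewrite /K mulrA.
  move=> h1 h2 IH.
  have -> : 2 * K * (a - b / 2) = 2 * K * (a - b) + K * b by field.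
  lra.
have Zb' n m : (n <= m)%N -> N (Z m - Z n) <= 2 * M * N y * (2 ^+ n)^-1.
  move=> nm; have := Zb n (m - n)%N; rewrite subnKC // => h.
  apply: le_trans h _; rewrite ler_wpM2l ?mulr_ge0 ?N_ge0 //.
  by rewrite lerBlDr lerDl invr_ge0 exprn_ge0.
have Z0 : Z 0%N = 0 by rewrite /Z /= T0.
have [z hz] : exists z : Y, Z @ \oo --> z.
  apply: cauchy_lim => e e0.
  have [K hK] := @archi2 _ (4 * M * N y) _ e0.
  exists K => m n Km Kn.
  have h1 := N_triD (Z m - Z K) (Z K - Z n); rewrite addrA subrK in h1.
  have h2 := Zb' K m Km; have h3 := Zb' K n Kn; rewrite NB in h3.
  move: hK h1 h2 h3; set q := (2 ^+ K)^-1.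
  have -> : 4 * M * N y * q = 2 * (2 * M * N y * q) by ring.
  lra.
have Nz : N z <= 2 * M * N y.
  apply/ler_addgt0Pr => e e0.
  have [K hK] := cvg_cv _ _ hz e e0.
  have h1 := N_triD (z - Z K) (Z K); rewrite subrK in h1.
  have h2 := Zb' 0%N K (leq0n _); rewrite Z0 subr0 expr0 invr1 mulr1 in h2.
  have h3 := hK K (leqnn _); rewrite NB in h3.
  lra.
have Spc : Sp @ \oo --> y.
  apply: cv_cvg => e e0.
  have [K hK] := @archi2 _ (N y) _ e0.
  exists K => m Km.
  rewrite SpE addrAC subrr add0r NN.
  apply: le_lt_trans (ykb m) _; apply: le_lt_trans hK.
  rewrite ler_wpM2l ?N_ge0 // lef_pV2 ?posrE ?exprn_gt0 //.
  by rewrite ler_eXn2l ?ltr1n.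
by rewrite (@clT Sp y z Spc hz).
Qed.
End CG.

Section Aux3.
Context {R : realType}.
Local Notation C := (R[i]).
Context {V W : normedModType C}.

Lemma lin_boundC (f : {linear V -> W}) : continuous f ->
  exists k : C, 0 <= k /\ forall x, `|f x| <= k * `|x|.
Proof.
move=> cf.
have := @continuous_linear_bounded _ _ _ 0 f (cf 0).
move/linear_boundedP/pinfty_ex_gt0 => [k k0 hk].
by exists k; split => //; exact: ltW.
Qed.

Lemma bound_contC (f : {linear V -> W}) (k : C) : 0 <= k ->
  (forall x, `|f x| <= k * `|x|) -> continuous f.
Proof.
move=> k0 hk; apply: bounded_linear_continuous; apply/linear_boundedP.
near=> r => x.
apply: le_trans (hk x) _; rewrite ler_wpM2r //.
near: r; apply: nbhs_pinfty_ge.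
exact: ger0_real.
Unshelve. all: by end_near.
Qed.

Lemma mk_linear (f : V -> W) : linear f ->
  exists g : {linear V -> W}, forall x, g x = f x.
Proof.
move=> lf.
pose g : {linear V -> W} := HB.pack f (GRing.isLinear.Build _ _ _ _ _ lf).
by exists g.
Qed.
End Aux3.

Lemma zid3 (V : zmodType) (lu lw aw pw pu : V) :
  aw + pw = lw -> (- lu + lw) - (- lu + aw + (- pu + pw)) = pu.
Proof.
move=> <-.
rewrite -[- lu + aw + _]addrA [- lu + (aw + pw)]addrC addrKA.
by rewrite [aw + pw]addrC addrKA [- pu + pw]addrC subKr.
Qed.

Lemma zid2 (V : zmodType) (a b c d e : V) :
  b = c + (d + e) -> a + b = a + d + (c + e).
Proof. move=> ->. by rewrite -addrA [c + (d + e)]addrCA. Qed.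


Theorem proposition4p7 (R : realType)
  (X dX : completeNormedModType R[i])
  (DAm : set X) (Am : X -> X)
  (L : {linear X -> dX})
  (DB : set X) (B : X -> dX)
  (DP : set X) (P : X -> X)
  (l : R[i])
  (DLAm : {linear dX -> X}) :
  (* A_m closed linear operator *)
  lin_op DAm Am -> closed_op DAm Am ->
  (* L ∈ L(X, ∂X) surjective *)
  continuous L -> (forall y : dX, exists x : X, L x = y) ->
  (* B relatively A_0-bounded, A_0 = A_m restricted to D(A_m) ∩ ker L *)
  lin_op DB B ->
  rel_bounded DB B (DAm `&` [set x | L x = 0]) Am ->
  (* P relatively A_m-bounded *)
  lin_op DP P -> rel_bounded DP P DAm Am ->
  (* λ ∈ ρ(A_0) ∩ ρ(A_0 + P), with D(A_0 + P) = D(A_0) *)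
  in_resolvent (DAm `&` [set x | L x = 0]) Am l ->
  in_resolvent (DAm `&` [set x | L x = 0]) (fun x => Am x + P x) l ->
  (* L^{A_m}_λ := (L|_{ker(λ - A_m)})^{-1} ∈ L(∂X, X) *)
  dirichlet_op DAm Am L l DLAm ->
  exists DLAmP : {linear dX -> X},
    (* L^{A_m+P}_λ := (L|_{ker(λ - A_m - P)})^{-1} ∈ L(∂X, X) exists *)
    dirichlet_op DAm (fun x => Am x + P x) L l DLAmP /\
    (* D(N^{A_m}_λ) = D(N^{A_m+P}_λ) *)
    (forall x : dX, DB (DLAm x) <-> DB (DLAmP x)) /\
    (* N^{A_m}_λ - N^{A_m+P}_λ is bounded on the common domain *)
    (exists c : R[i], 0 <= c /\
       forall x : dX, DB (DLAm x) ->
         `|B (DLAm x) - B (DLAmP x)| <= c * `|x|).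
Proof.
move=> [[DAm0 DAmS] linAm] cAm cL _ [[DB0 DBS] linB] [D0B [aB [bB [aB0 [bB0 hB]]]]]
  [[DP0 DPS] linP] [DAmP [aP [bP [aP0 [bP0 hP]]]]] _ [R2 [cR2 [R2a R2b]]]
  [cD [Da Db]].
have AmD x y : DAm x -> DAm y -> Am (x + y) = Am x + Am y.
  by move=> hx hy; have := linAm 1 x y hx hy; rewrite !scale1r.
have PD x y : DAm x -> DAm y -> P (x + y) = P x + P y.
  by move=> hx hy; have := linP 1 x y (DAmP _ hx) (DAmP _ hy); rewrite !scale1r.
have BD x y : DB x -> DB y -> B (x + y) = B x + B y.
  by move=> hx hy; have := linB 1 x y hx hy; rewrite !scale1r.
have AmE x : Am (DLAm x) = l *: DLAm x.
  by have [_ [h _]] := Da x; apply/eqP; rewrite eq_sym -subr_eq0 h.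
pose F x := DLAm x + R2 (P (DLAm x)).
have PDL : linear (fun x => P (DLAm x)).
  move=> a x y /=; rewrite linearP.
  by apply: linP; apply: DAmP; have [] := Da x; have [] := Da y.
have lF : linear F.
  move=> a x y; have hPD := PDL a x y; simpl in hPD.
  rewrite /F hPD linearP.
  by rewrite linearP scalerDr -!addrA; congr (_ + _); rewrite addrCA.
have [G GE] := mk_linear lF.
have [k1 [k10 hk1]] := lin_boundC DLAm cD.
have [k2 [k20 hk2]] := lin_boundC R2 cR2.
pose T y := Am (R2 y).
have linT : forall (a : R[i]) x y, T (a *: x + y) = a *: T x + T y.
  move=> a x y; rewrite /T linearP; apply: linAm.
    by have [[]] := R2a x.
  by have [[]] := R2a y.
have clT : forall (u : nat -> X) (x : X) (z : X),
    u @ \oo --> x -> (T \o u) @ \oo --> z -> T x = z.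
  move=> u x z hu hz.
  have h1 : (R2 \o u) @ \oo --> R2 x by apply: cvg_comp hu (cR2 x).
  have h2 : (fun n => (R2 (u n), T (u n))) @ \oo --> (R2 x, z).
    by apply: cvg_pair.
  have hg : [set p : X * X | DAm p.1 /\ p.2 = Am p.1] (R2 x, z).
    have cA : closed [set p : X * X | DAm p.1 /\ p.2 = Am p.1] := cAm.
    refine (@closed_cvg nat _ \oo _ (fun n => (R2 (u n), T (u n))) _ cA _ _ h2).
    apply: nearW => n /=; split => //.
    by have [[]] := R2a (u n).
  by case: hg => _ /= ->.
have [MT [MT0 hMT]] := @closed_graph R X X T linT clT.
have hT y : `|T y| <= MT%:C * `|y|.
  by rewrite !NE -rmorphM lecR.
pose cp := (aP * `|l| + bP) * k1.
have cp0 : 0 <= cp by rewrite mulr_ge0 // addr_ge0 // mulr_ge0.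
have Du x : DAm (DLAm x) by have [] := Da x.
have hPu x : `|P (DLAm x)| <= cp * `|x|.
  apply: le_trans (hP _ (Du x)) _.
  rewrite AmE normrZ mulrA -mulrDl /cp -mulrA.
  by rewrite ler_wpM2l ?addr_ge0 ?mulr_ge0.
have D0v x : DAm (R2 (P (DLAm x))) /\ L (R2 (P (DLAm x))) = 0.
  by have [[]] := R2a (P (DLAm x)).
have hv x : `|R2 (P (DLAm x))| <= k2 * cp * `|x|.
  apply: le_trans (hk2 _) _; rewrite -mulrA ler_wpM2l //.
have hAv x : `|Am (R2 (P (DLAm x)))| <= MT%:C * cp * `|x|.
  apply: le_trans (hT _) _; rewrite -mulrA ler_wpM2l //.
  by rewrite ler0c.
exists G; split; [split; [|split] | split].
- have k0 : 0 <= k1 + k2 * cp by rewrite addr_ge0 // mulr_ge0.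
  apply: (@bound_contC _ _ _ G _ k0) => x.
  rewrite GE /F mulrDl.
  apply: le_trans (ler_normD _ _) _.
  by apply: lerD; [exact: hk1 | exact: hv].
- move=> x; rewrite GE /F.
  have [Dv Lv] := D0v x.
  have DuvA : DAm (DLAm x + R2 (P (DLAm x))).
    by have := DAmS 1 _ _ (Du x) Dv; rewrite scale1r.
  split => //; split.
    rewrite AmD // PD // AmE scalerDr.
    apply/eqP; rewrite subr_eq0; apply/eqP.
    apply: zid2.
    have [_ h] := R2a (P (DLAm x)).
    by move/eqP: h; rewrite subr_eq => /eqP.
  by rewrite linearD /= Lv addr0; have [_ []] := Da x.
- move=> w Dw hw; rewrite GE /F.
  set u := DLAm (L w).
  have Duu : DAm u by exact: Du.
  have Lu : L u = L w by have [_ []] := Da (L w).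
  have Dz : DAm ((-1) *: u + w) := DAmS (-1) u w Duu Dw.
  have Lz : L ((-1) *: u + w) = 0 by rewrite linearP /= Lu scaleN1r addNr.
  have hz := R2b ((-1) *: u + w) (conj Dz Lz).
  have -> : P u = l *: ((-1) *: u + w) - (Am ((-1) *: u + w) + P ((-1) *: u + w)).
    have Au : Am u = l *: u by exact: AmE.
    rewrite linAm // (linP _ _ _ (DAmP _ Duu) (DAmP _ Dw)) Au !scaleN1r scalerDr scalerN.
    apply/esym/zid3.
    by apply/esym/subr0_eq.
  by rewrite hz scaleN1r addrA subrr add0r.
- move=> x; have [Dv _] := D0v x.
  have DBv : DB (R2 (P (DLAm x))) by apply: D0B; have := D0v x.
  rewrite GE /F; split => h.
    by have := DBS 1 _ _ h DBv; rewrite scale1r.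
  have := DBS (-1) _ _ DBv h.
  by rewrite scaleN1r addrC addrK.
- exists (aB * MT%:C * cp + bB * k2 * cp); split.
    apply: addr_ge0; apply: mulr_ge0 => //; apply: mulr_ge0 => //.
    by rewrite ler0c.
  move=> x Dx; rewrite GE /F.
  have [Dv Lv] := D0v x.
  have DBv : DB (R2 (P (DLAm x))) by apply: D0B.
  rewrite BD // opprD addrA subrr add0r normrN.
  apply: le_trans (hB _ (conj Dv Lv)) _.
  rewrite mulrDl; apply: lerD.
    by apply: le_trans (ler_wpM2l aB0 (hAv x)) _; rewrite !mulrA.
  by apply: le_trans (ler_wpM2l bB0 (hv x)) _; rewrite !mulrA.
Qed.
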